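(* Let $A\subset\mathbb N$ be a translate of an SIP set, i.e. suppose there exist an infinite set $L\subset\mathbb N$ and $u\in\mathbb Z$ with $(SIP(L)+u)\cap\mathbb N\subset A$. Then for every odd positive integer $K$, the map $\pi_K\circ z:A\to\mathbb Z/K\mathbb Z$ is surjective, where $\pi_K:\mathbb Z\to\mathbb Z/K\mathbb Z$ is the quotient map.
   Context: $\mathbb N=\{1,2,\dots\}$. For a finite $F\subset\mathbb Z$, $\sigma_F$ is the sum of its elements ($\sigma_\emptyset=0$); for $A\subset\mathbb Z$, $IP(A)=\{\sigma_F:F\subset A\text{ finite}\}$ and $SIP(A)=\{a-b:a,b\in IP(A)\}$. Every integer $t$ has a unique balanced ternary expansion $t=\sum_{n\in\mathbb N}\epsilon_n3^{n-1}$ with $\epsilon_n\in\{-1,0,1\}$, finitely many nonzero; let $r(t)$ be the number of nonzero digits and $j_1(t)<\dots<j_{r(t)}(t)$ their indices. The sign change count $z:\mathbb N\to\mathbb Z_+$ is $z(t)=\#\{i\in\{1,\dots,r(t)-1\}:\epsilon_{j_i(t)}\epsilon_{j_{i+1}(t)}<0\}$ (the number of sign changes between consecutive nonzero digits; in particular $z(3^{n-1})=0$). *)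

(* Defs.v *)
From Stdlib Require Import ZArith List Lia.
Import ListNotations.
Open Scope Z_scope.

(* sigma_F for a finite set F given as a duplicate-free list *)
Definition zsum (l : list Z) : Z := fold_right Z.add 0 l.

Definition IP (A : Z -> Prop) (x : Z) : Prop :=
  exists F : list Z, NoDup F /\ Forall A F /\ zsum F = x.

Definition SIP (A : Z -> Prop) (x : Z) : Prop :=
  exists a b, IP A a /\ IP A b /\ x = a - b.

Definition infinite_set (L : Z -> Prop) : Prop :=
  ~ exists l : list Z, forall x, L x -> In x l.

(* Balanced ternary digits eps_1, eps_2, ... (least significant first),
   computed with fuel; fuel |t|+1 suffices since |(t-d)/3| < |t| for t <> 0. *)
Fixpoint bt_digits_fuel (fuel : nat) (t : Z) : list Z :=
  match fuel with
  | O => []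
  | S f =>
      if Z.eqb t 0 then []
      else
        let r := t mod 3 in
        let d := if Z.eqb r 2 then -1 else r in
        d :: bt_digits_fuel f ((t - d) / 3)
  end.

Definition bt_digits (t : Z) : list Z := bt_digits_fuel (S (Z.to_nat (Z.abs t))) t.

Fixpoint sign_changes (l : list Z) : nat :=
  match l with
  | x :: ((y :: _) as tl) => Nat.add (if x * y <? 0 then 1%nat else 0%nat) (sign_changes tl)
  | _ => O
  end.

(* z(t): number of sign changes between consecutive nonzero balanced-ternary digits *)
Definition zsc (t : Z) : nat :=
  sign_changes (filter (fun d => negb (Z.eqb d 0)) (bt_digits t)).

Example bt_ex1 : bt_digits 5 = [-1; -1; 1]. Proof. reflexivity. Qed.
Example bt_ex2 : bt_digits (-7) = [-1; 1; -1]. Proof. reflexivity. Qed.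
Example zsc_ex1 : zsc 5 = 1%nat. Proof. reflexivity. Qed.
Example zsc_ex2 : zsc 9 = 0%nat. Proof. reflexivity. Qed.
Example zsc_ex3 : zsc 7 = 2%nat. Proof. reflexivity. Qed.

(* Main.v *)
Require Import Defs.
From Stdlib Require Import ZArith List Lia Classical.
Import ListNotations.
Open Scope Z_scope.

Fixpoint val (l : list Z) : Z := match l with [] => 0 | d :: l' => d + 3 * val l' end.
Fixpoint valid (l : list Z) : Prop :=
  match l with [] => True | d :: l' => -1 <= d <= 1 /\ valid l' /\ (l' = [] -> d <> 0) end.
Definition bnd (l : list Z) : Prop := Forall (fun d => -1 <= d <= 1) l.

Lemma bt_fuel_ok : forall f t, Z.abs t < Z.of_nat f ->
  valid (bt_digits_fuel f t) /\ val (bt_digits_fuel f t) = t.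
Proof.
  induction f as [|f IH]; intros t Ht; [lia|].
  simpl. destruct (Z.eqb_spec t 0) as [E|E]; [simpl; split; [exact I| lia]|].
  pose proof (Z.div_mod t 3 ltac:(lia)) as Hdm.
  pose proof (Z.mod_pos_bound t 3 ltac:(lia)) as Hb.
  set (q := t / 3) in *. set (r := t mod 3) in *. clearbody q r. rewrite Nat2Z.inj_succ in Ht.
  destruct (Z.eqb_spec r 2) as [R|R].
  - assert (H3 : t - -1 = (q + 1) * 3) by lia.
    rewrite H3, Z.div_mul by lia.
    destruct (IH (q+1) ltac:(lia)) as [V1 V2].
    cbn [val valid]. split; [|lia]. repeat split; try lia; auto.
  - assert (H3 : t - r = q * 3) by lia.
    rewrite H3, Z.div_mul by lia.
    destruct (IH q ltac:(lia)) as [V1 V2].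
    cbn [val valid]. split; [|lia]. repeat split; try lia; auto.
    intros Hn. rewrite Hn in V2. simpl in V2. lia.
Qed.

Lemma bt_ok : forall t, valid (bt_digits t) /\ val (bt_digits t) = t.
Proof. intros t. unfold bt_digits. apply bt_fuel_ok. lia. Qed.

Lemma val0 : forall l, valid l -> val l = 0 -> l = [].
Proof.
  induction l as [|d l IH]; cbn [val valid]; intros V H; auto.
  destruct V as (B & V & N).
  assert (d = 0) by lia. subst. assert (val l = 0) by lia.
  specialize (IH V H0). exfalso; apply N; auto.
Qed.

Lemma val_inj : forall l1 l2, valid l1 -> valid l2 -> val l1 = val l2 -> l1 = l2.
Proof.
  induction l1 as [|d l1 IH]; intros l2 V1 V2 H.
  - symmetry. apply val0; auto.
  - destruct l2 as [|e l2].
    + apply val0; auto.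
    + cbn [val valid] in *. destruct V1 as (B1 & V1 & _). destruct V2 as (B2 & V2 & _).
      assert (d = e) by lia. subst. f_equal. apply IH; auto. lia.
Qed.

Lemma bt_val : forall l, valid l -> bt_digits (val l) = l.
Proof. intros l V. destruct (bt_ok (val l)). apply val_inj; auto. Qed.

Lemma val_app : forall l1 l2, val (l1 ++ l2) = val l1 + 3 ^ Z.of_nat (length l1) * val l2.
Proof.
  induction l1 as [|d l1 IH]; intros l2; cbn [val app length]. lia.
  rewrite IH, Nat2Z.inj_succ, Z.pow_succ_r by lia. ring.
Qed.

Lemma valid_bnd : forall l, valid l -> bnd l.
Proof. induction l; simpl; intros; constructor; tauto. Qed.

Lemma valid_app : forall l1 l2, bnd l1 -> valid l2 -> l2 <> [] -> valid (l1 ++ l2).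
Proof.
  induction l1 as [|d l1 IH]; intros l2 B V N; cbn [app valid]; auto.
  inversion B; subst. split; [assumption|]. split; [apply IH; auto|].
  intros E. apply app_eq_nil in E. tauto.
Qed.

Lemma bnd_rep : forall k, bnd (repeat 0 k).
Proof. induction k; simpl; constructor; auto; lia. Qed.

Lemma val_rep : forall k, val (repeat 0 k) = 0.
Proof. induction k; cbn [val repeat]; auto; lia. Qed.

Lemma valid_opp : forall l, valid l -> valid (map Z.opp l) /\ val (map Z.opp l) = - val l.
Proof.
  induction l as [|d l IH]; cbn [val valid map]; intros V; [split; auto|].
  destruct V as (B & V & N). destruct (IH V) as [V' E]. repeat split; try lia; auto.
  intros Hm. apply map_eq_nil in Hm. specialize (N Hm). lia.
Qed.

Lemma bt_opp : forall t, bt_digits (- t) = map Z.opp (bt_digits t).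
Proof.
  intros t. destruct (bt_ok t) as [V E]. destruct (valid_opp _ V) as [V' E'].
  rewrite <- (bt_val _ V'). rewrite E', E. reflexivity.
Qed.

Definition nz (l : list Z) : list Z := filter (fun d => negb (Z.eqb d 0)) l.

Lemma zsc_nz : forall t, zsc t = sign_changes (nz (bt_digits t)).
Proof. reflexivity. Qed.

Lemma nz_app : forall l1 l2, nz (l1 ++ l2) = nz l1 ++ nz l2.
Proof. intros; unfold nz; apply filter_app. Qed.

Lemma nz_rep : forall k, nz (repeat 0 k) = [].
Proof. induction k; simpl; auto. Qed.

Lemma nz_opp : forall l, nz (map Z.opp l) = map Z.opp (nz l).
Proof.
  induction l as [|d l IH]; simpl; auto. unfold nz in *; simpl.
  destruct (Z.eqb_spec d 0); destruct (Z.eqb_spec (- d) 0); try lia; simpl; rewrite IH; auto.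
Qed.

Lemma last_app_ne : forall (l1 l2 : list Z), l2 <> [] -> last (l1 ++ l2) 0 = last l2 0.
Proof.
  induction l1 as [|x l1 IH]; intros l2 N; simpl; auto.
  rewrite <- (IH l2 N). destruct (l1 ++ l2) eqn:E.
  - apply app_eq_nil in E; tauto.
  - reflexivity.
Qed.

Lemma last_nz_sgn : forall l, valid l -> l <> [] -> last (nz l) 0 = Z.sgn (val l).
Proof.
  induction l as [|d l IH]; intros V N; [congruence|].
  cbn [valid val] in V. destruct V as (B & V & H0).
  destruct l as [|e l'].
  - specialize (H0 eq_refl). unfold nz; simpl.
    destruct (Z.eqb_spec d 0); [lia|]. simpl. destruct (Z.eqb_spec d 1); subst; simpl; auto.
    assert (d = -1) by lia; subst; auto.
  - assert (Hl : e :: l' <> []) by congruence.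
    specialize (IH V Hl).
    change (nz (d :: e :: l')) with (nz ([d] ++ e :: l')). rewrite nz_app.
    assert (Hv : val (e :: l') <> 0) by (intro Hz; pose proof (val0 _ V Hz); congruence).
    assert (Hn : nz (e :: l') <> []) by (intro Hz; rewrite Hz in IH;
        exact (Hv (proj1 (Z.sgn_null_iff _) (eq_sym IH)))).
    rewrite last_app_ne by auto. rewrite IH. change (val (d :: e :: l')) with (d + 3 * val (e :: l')).
    remember (val (e :: l')) as v.
    destruct (Z.lt_trichotomy v 0) as [Hlt|[Heq|Hgt]]; [|lia|].
    + rewrite (Z.sgn_neg v) by lia. rewrite Z.sgn_neg by lia. reflexivity.
    + rewrite (Z.sgn_pos v) by lia. rewrite Z.sgn_pos by lia. reflexivity.
Qed.

Definition jn (x y : Z) : nat := if x * y <? 0 then 1%nat else 0%nat.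

Lemma sc_app : forall l1 l2, l1 <> [] -> l2 <> [] ->
  sign_changes (l1 ++ l2) = (sign_changes l1 + sign_changes l2 + jn (last l1 0%Z) (hd 0%Z l2))%nat.
Proof.
  induction l1 as [|x l1 IH]; intros l2 N1 N2; [congruence|].
  destruct l1 as [|x' l1'].
  - destruct l2 as [|y l2']; [congruence|]. simpl. unfold jn. lia.
  - change ((x :: x' :: l1') ++ l2) with (x :: ((x' :: l1') ++ l2)).
    assert (E : exists r, (x' :: l1') ++ l2 = x' :: r) by (eexists; reflexivity).
    destruct E as [r Er]. rewrite Er.
    change (sign_changes (x :: x' :: r)) with
      (Nat.add (if x * x' <? 0 then 1%nat else 0%nat) (sign_changes (x' :: r))).
    rewrite <- Er. rewrite IH by congruence.
    change (sign_changes (x :: x' :: l1')) with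
      (Nat.add (if x * x' <? 0 then 1%nat else 0%nat) (sign_changes (x' :: l1'))).
    change (last (x :: x' :: l1') 0) with (last (x' :: l1') 0). lia.
Qed.

Lemma sc_opp : forall l, sign_changes (map Z.opp l) = sign_changes l.
Proof.
  induction l as [|x l IH]; auto.
  destruct l as [|y l']; auto.
  change (sign_changes (map Z.opp (x :: y :: l'))) with
    (Nat.add (if (-x) * (-y) <? 0 then 1%nat else 0%nat) (sign_changes (map Z.opp (y :: l')))).
  rewrite IH, Z.mul_opp_opp. reflexivity.
Qed.

Lemma nz_elem : forall l x, valid l -> In x (nz l) -> x = 1 \/ x = -1.
Proof.
  intros l x V H. unfold nz in H. apply filter_In in H. destruct H as [H1 H2].
  apply valid_bnd in V. unfold bnd in V. rewrite Forall_forall in V. specialize (V _ H1).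
  destruct (Z.eqb_spec x 0); simpl in H2; [discriminate|lia].
Qed.

Lemma nz_ne : forall v, v <> 0 -> nz (bt_digits v) <> [].
Proof.
  intros v Hv. destruct (bt_ok v) as [V E].
  assert (N : bt_digits v <> []) by (intro Hz; rewrite Hz in E; simpl in E; lia).
  pose proof (last_nz_sgn _ V N) as L. rewrite E in L. intro Hz. rewrite Hz in L.
  exact (Hv (proj1 (Z.sgn_null_iff _) (eq_sym L))).
Qed.

Lemma junction : forall y v (M : nat), y <> 0 -> v <> 0 -> (length (bt_digits y) <= M)%nat ->
  zsc (y + 3 ^ Z.of_nat M * v) = (zsc y + zsc v + jn (Z.sgn y) (hd 0%Z (nz (bt_digits v))))%nat /\
  Z.sgn (y + 3 ^ Z.of_nat M * v) = Z.sgn v /\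
  length (bt_digits (y + 3 ^ Z.of_nat M * v)) = (M + length (bt_digits v))%nat.
Proof.
  intros y v M Hy Hv HM.
  destruct (bt_ok y) as [Vy Ey]. destruct (bt_ok v) as [Vv Ev].
  set (dy := bt_digits y) in *. set (dv := bt_digits v) in *.
  set (k := (M - length dy)%nat).
  assert (Nv : dv <> []) by (intro Hz; rewrite Hz in Ev; simpl in Ev; lia).
  assert (Ny : dy <> []) by (intro Hz; rewrite Hz in Ey; simpl in Ey; lia).
  assert (Vf : valid (dy ++ repeat 0 k ++ dv)).
  { apply valid_app. apply valid_bnd; auto. apply valid_app; auto. apply bnd_rep.
    intro Hz; apply app_eq_nil in Hz; tauto. }
  assert (Evf : val (dy ++ repeat 0 k ++ dv) = y + 3 ^ Z.of_nat M * v).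
  { rewrite !val_app, val_rep, repeat_length, Ey, Ev.
    assert (HMk : Z.of_nat M = Z.of_nat (length dy) + Z.of_nat k) by (unfold k; lia).
    rewrite HMk, Z.pow_add_r by lia. ring. }
  rewrite !zsc_nz. rewrite <- Evf, bt_val by auto.
  pose proof (nz_ne v Hv) as Nn. fold dv in Nn.
  pose proof (nz_ne y Hy) as Nny. fold dy in Nny.
  split; [|split].
  - rewrite !nz_app, nz_rep. simpl app.
    rewrite sc_app by auto. fold dy dv.
    rewrite last_nz_sgn, Ey by auto. reflexivity.
  - rewrite <- (last_nz_sgn _ Vf) by (intro Hz; apply app_eq_nil in Hz; tauto).
    rewrite !nz_app, nz_rep. simpl app. rewrite last_app_ne by auto.
    rewrite last_nz_sgn, Ev by auto. reflexivity.
  - rewrite !app_length, repeat_length. lia.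
Qed.

Lemma fresh : forall (L : Z -> Prop), infinite_set L -> forall n U, exists l,
  length l = n /\ NoDup l /\ Forall L l /\ forall x, In x l -> ~ In x U.
Proof.
  intros L HL n U. induction n as [|n IH].
  - exists []. split; [reflexivity|]. split; [constructor|]. split; [constructor|]. intros x [].
  - destruct IH as (l & Hlen & Hnd & Hf & Hd).
    assert (exists x, L x /\ ~ In x (U ++ l)) as (x & Lx & Nx).
    { apply NNPP. intro C. apply HL. exists (U ++ l). intros x Lx.
      apply NNPP. intro C'. apply C. eauto. }
    rewrite in_app_iff in Nx.
    exists (x :: l). simpl. split; [lia|]. split; [constructor; tauto|].
    split; [constructor; auto|].
    intros y [<-|Hy]; [tauto|]. apply Hd in Hy. tauto.
Qed.

Lemma nodup_map_or : forall (f : Z -> Z) l, NoDup l ->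
  NoDup (map f l) \/ exists x y, In x l /\ In y l /\ x <> y /\ f x = f y.
Proof.
  intros f l. induction l as [|a l IH]; intros Hn; [left; constructor|].
  inversion Hn; subst. destruct (IH H2) as [H|(x & y & Hx & Hy & Hxy & E)].
  - destruct (classic (exists y, In y l /\ f y = f a)) as [(y & Hy & E)|C].
    + right. exists a, y. simpl. repeat split; auto. intro; subst; tauto.
    + left. simpl. constructor; auto. intro Hi. apply in_map_iff in Hi.
      destruct Hi as (y & E & Hy). apply C; eauto.
  - right. exists x, y. simpl. tauto.
Qed.

Lemma pigeon : forall m l, 0 < m -> NoDup l -> m < Z.of_nat (length l) ->
  exists x y, In x l /\ In y l /\ x <> y /\ x mod m = y mod m.
Proof.
  intros m l Hm Hn Hl.
  destruct (nodup_map_or (fun x => x mod m) l Hn) as [H|H]; auto.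
  exfalso.
  assert (Hi : incl (map (fun x => x mod m) l) (map Z.of_nat (seq 0 (Z.to_nat m)))).
  { intros z Hz. apply in_map_iff in Hz. destruct Hz as (x & <- & _).
    pose proof (Z.mod_pos_bound x m Hm).
    apply in_map_iff. exists (Z.to_nat (x mod m)). split; [lia|].
    apply in_seq. lia. }
  pose proof (NoDup_incl_length H Hi). rewrite !length_map, length_seq in H0. lia.
Qed.

Lemma block : forall (L : Z -> Prop), infinite_set L -> forall U (M : nat),
  exists y1 y2 w, L y1 /\ L y2 /\ ~ In y1 U /\ ~ In y2 U /\ y1 <> y2 /\
    y1 - y2 = 3 ^ Z.of_nat M * w /\ w <> 0.
Proof.
  intros L HL U M.
  set (m := 3 ^ Z.of_nat M).
  assert (Hm : 0 < m) by (apply Z.pow_pos_nonneg; lia).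
  destruct (fresh L HL (S (Z.to_nat m)) U) as (l & Hlen & Hnd & Hf & Hd).
  destruct (pigeon m l Hm Hnd ltac:(rewrite Hlen; lia)) as (x & y & Hx & Hy & Hxy & E).
  rewrite Forall_forall in Hf.
  pose proof (Z.div_mod x m ltac:(lia)). pose proof (Z.div_mod y m ltac:(lia)).
  exists x, y, (x / m - y / m). repeat split; auto.
  - fold m. rewrite Z.mul_sub_distr_l. lia.
  - intro Hz. apply Hxy. assert (x / m = y / m) by lia. lia.
Qed.

Definition Good (L : Z -> Prop) (u : Z) (U : list Z) (y : Z) := exists F G,
  NoDup F /\ NoDup G /\ Forall L F /\ Forall L G /\ incl F U /\ incl G U /\
  y = u + zsum F - zsum G.
Definition St L u U (M : nat) y := Good L u U y /\ y <> 0 /\ (length (bt_digits y) <= M)%nat.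

Lemma zsc_opp : forall w, zsc (- w) = zsc w.
Proof. intros w. rewrite !zsc_nz, bt_opp, nz_opp, sc_opp. reflexivity. Qed.

Lemma hd_opp : forall l, hd 0 (map Z.opp l) = - hd 0 l.
Proof. destruct l; simpl; auto. Qed.

Lemma sgn_pm : forall y, y <> 0 -> Z.sgn y = 1 \/ Z.sgn y = -1.
Proof.
  intros y Hy. destruct (Z.lt_trichotomy y 0) as [H|[H|H]]; [|lia|].
  - right. apply Z.sgn_neg; auto.
  - left. apply Z.sgn_pos; auto.
Qed.

Lemma hd_pm : forall w, w <> 0 -> hd 0 (nz (bt_digits w)) = 1 \/ hd 0 (nz (bt_digits w)) = -1.
Proof.
  intros w Hw. pose proof (nz_ne w Hw). destruct (bt_ok w) as [V _].
  destruct (nz (bt_digits w)) as [|x l] eqn:E; [congruence|].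
  simpl. apply (nz_elem (bt_digits w)); auto. rewrite E; left; auto.
Qed.

Definition Jz (s b : Z) : Z := if s * b <? 0 then 1 else 0.

Lemma succ : forall L u U M y1 y2 w y,
  L y1 -> L y2 -> ~ In y1 U -> ~ In y2 U -> y1 <> y2 ->
  y1 - y2 = 3 ^ Z.of_nat M * w -> w <> 0 ->
  St L u U M y ->
  exists yp ym,
    St L u (y1 :: y2 :: U) (M + length (bt_digits w)) yp /\
    St L u (y1 :: y2 :: U) (M + length (bt_digits w)) ym /\
    Z.sgn yp = Z.sgn w /\ Z.sgn ym = - Z.sgn w /\
    Z.of_nat (zsc yp) = Z.of_nat (zsc y) + Z.of_nat (zsc w) + Jz (Z.sgn y) (hd 0 (nz (bt_digits w))) /\
    Z.of_nat (zsc ym) = Z.of_nat (zsc y) + Z.of_nat (zsc w) + 1 - Jz (Z.sgn y) (hd 0 (nz (bt_digits w))).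
Proof.
  intros L u U M y1 y2 w y L1 L2 N1 N2 N12 Ew Hw (HG & Hy & HM).
  destruct HG as (F & G & NF & NG & LF & LG & IF & IG & Ey).
  assert (Hw' : - w <> 0) by lia.
  destruct (junction y w M Hy Hw HM) as (Zp & Sp & Lp).
  destruct (junction y (-w) M Hy Hw' HM) as (Zm & Sm & Lm).
  rewrite zsc_opp, bt_opp, nz_opp, hd_opp, Z.sgn_opp, length_map in *.
  pose proof (sgn_pm y Hy) as Hs. pose proof (hd_pm w Hw) as Hb.
  exists (y + 3 ^ Z.of_nat M * w), (y + 3 ^ Z.of_nat M * - w).
  assert (Hnf : forall x, In x F -> In x U) by exact IF.
  assert (Hng : forall x, In x G -> In x U) by exact IG.
  split; [|split; [|split; [|split; [|split]]]].
  - split; [|split].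
    + exists (y1 :: F), (y2 :: G). repeat split.
      * constructor; auto.
      * constructor; auto.
      * constructor; auto.
      * constructor; auto.
      * intros x [<-|Hx]; simpl; auto.
      * intros x [<-|Hx]; simpl; auto.
      * simpl. lia.
    + intro Hz. rewrite <- Z.sgn_null_iff, Sp in Hz. apply Hw. apply Z.sgn_null_iff; auto.
    + lia.
  - split; [|split].
    + exists (y2 :: F), (y1 :: G). repeat split.
      * constructor; auto.
      * constructor; auto.
      * constructor; auto.
      * constructor; auto.
      * intros x [<-|Hx]; simpl; auto.
      * intros x [<-|Hx]; simpl; auto.
      * simpl. lia.
    + intro Hz. rewrite <- Z.sgn_null_iff, Sm in Hz. apply Hw. apply Z.sgn_null_iff; lia.
    + lia.
  - auto.
  - auto.
  - rewrite Zp. unfold jn, Jz. destruct (_ <? 0); lia.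
  - rewrite Zm. unfold jn, Jz.
    destruct Hs as [-> | ->]; destruct Hb as [-> | ->]; simpl; lia.
Qed.

Definition Fam L u U M (n : nat) a s := forall i, (i < n)%nat ->
  exists y, St L u U M y /\ Z.sgn y = s /\ Z.of_nat (zsc y) = a + 2 * Z.of_nat i.

Lemma step1 : forall L u, infinite_set L -> forall U M n a s, Fam L u U M n a s ->
  exists U' M' a' s', Fam L u U' M' n a' s' /\ Fam L u U' M' n (a' + 1) (- s').
Proof.
  intros L u HL U M n a s HF.
  destruct (block L HL U M) as (y1 & y2 & w & L1 & L2 & N1 & N2 & N12 & Ew & Hw).
  set (b := hd 0 (nz (bt_digits w))). set (c := Z.of_nat (zsc w)).
  exists (y1 :: y2 :: U), (M + length (bt_digits w))%nat, (a + c).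
  destruct (s * b <? 0) eqn:Es.
  - exists (- Z.sgn w). split.
    + intros i Hi. destruct (HF i Hi) as (y & Sy & Sg & Zy).
      destruct (succ L u U M y1 y2 w y L1 L2 N1 N2 N12 Ew Hw Sy) as (yp & ym & _ & Sm & _ & Gm & _ & Zm).
      exists ym. split; auto. split; auto. rewrite Zm, Zy. fold b c. rewrite Sg. unfold Jz; rewrite Es. lia.
    + intros i Hi. destruct (HF i Hi) as (y & Sy & Sg & Zy).
      destruct (succ L u U M y1 y2 w y L1 L2 N1 N2 N12 Ew Hw Sy) as (yp & ym & Sp & _ & Gp & _ & Zp & _).
      exists yp. split; auto. split; [lia|]. rewrite Zp, Zy. fold b c. rewrite Sg. unfold Jz; rewrite Es. lia.
  - exists (Z.sgn w). split.
    + intros i Hi. destruct (HF i Hi) as (y & Sy & Sg & Zy).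
      destruct (succ L u U M y1 y2 w y L1 L2 N1 N2 N12 Ew Hw Sy) as (yp & ym & Sp & _ & Gp & _ & Zp & _).
      exists yp. split; auto. split; auto. rewrite Zp, Zy. fold b c. rewrite Sg. unfold Jz; rewrite Es. lia.
    + intros i Hi. destruct (HF i Hi) as (y & Sy & Sg & Zy).
      destruct (succ L u U M y1 y2 w y L1 L2 N1 N2 N12 Ew Hw Sy) as (yp & ym & _ & Sm & _ & Gm & _ & Zm).
      exists ym. split; auto. split; auto. rewrite Zm, Zy. fold b c. rewrite Sg. unfold Jz; rewrite Es. lia.
Qed.

Lemma step2 : forall L u, infinite_set L -> forall U M n a s, (1 <= n)%nat ->
  Fam L u U M n a s -> Fam L u U M n (a + 1) (- s) ->
  exists U' M' a' s', Fam L u U' M' (S n) a' s'.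
Proof.
  intros L u HL U M n a s Hn HF HF2.
  destruct (block L HL U M) as (y1 & y2 & w & L1 & L2 & N1 & N2 & N12 & Ew & Hw).
  set (b := hd 0 (nz (bt_digits w))). set (c := Z.of_nat (zsc w)).
  assert (Hs : s = 1 \/ s = -1).
  { destruct (HF 0%nat ltac:(lia)) as (y & (_ & Hy & _) & Sg & _). rewrite <- Sg. apply sgn_pm; auto. }
  assert (Hb : b = 1 \/ b = -1) by (apply hd_pm; auto).
  exists (y1 :: y2 :: U), (M + length (bt_digits w))%nat, (a + c).
  destruct (s * b <? 0) eqn:Es.
  - assert (Es' : (- s) * b <? 0 = false) by (destruct Hs as [-> | ->]; destruct Hb as [-> | ->]; simpl in *; auto; discriminate).
    exists (- Z.sgn w). intros i Hi.
    destruct (Nat.eq_dec i n) as [->|Hne].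
    + destruct (HF2 (n - 1)%nat ltac:(lia)) as (y & Sy & Sg & Zy).
      destruct (succ L u U M y1 y2 w y L1 L2 N1 N2 N12 Ew Hw Sy) as (yp & ym & _ & Sm & _ & Gm & _ & Zm).
      exists ym. split; auto. split; auto. rewrite Zm, Zy. fold b c. rewrite Sg. unfold Jz; rewrite Es'. lia.
    + destruct (HF i ltac:(lia)) as (y & Sy & Sg & Zy).
      destruct (succ L u U M y1 y2 w y L1 L2 N1 N2 N12 Ew Hw Sy) as (yp & ym & _ & Sm & _ & Gm & _ & Zm).
      exists ym. split; auto. split; auto. rewrite Zm, Zy. fold b c. rewrite Sg. unfold Jz; rewrite Es. lia.
  - assert (Es' : (- s) * b <? 0 = true) by (destruct Hs as [-> | ->]; destruct Hb as [-> | ->]; simpl in *; auto; discriminate).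
    exists (Z.sgn w). intros i Hi.
    destruct (Nat.eq_dec i n) as [->|Hne].
    + destruct (HF2 (n - 1)%nat ltac:(lia)) as (y & Sy & Sg & Zy).
      destruct (succ L u U M y1 y2 w y L1 L2 N1 N2 N12 Ew Hw Sy) as (yp & ym & Sp & _ & Gp & _ & Zp & _).
      exists yp. split; auto. split; auto. rewrite Zp, Zy. fold b c. rewrite Sg. unfold Jz; rewrite Es'. lia.
    + destruct (HF i ltac:(lia)) as (y & Sy & Sg & Zy).
      destruct (succ L u U M y1 y2 w y L1 L2 N1 N2 N12 Ew Hw Sy) as (yp & ym & Sp & _ & Gp & _ & Zp & _).
      exists yp. split; auto. split; auto. rewrite Zp, Zy. fold b c. rewrite Sg. unfold Jz; rewrite Es. lia.
Qed.

Lemma base : forall L u, (forall x, L x -> 1 <= x) -> infinite_set L -> exists U M a s, Fam L u U M 1 a s.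
Proof.
  intros L u HP HL.
  destruct (Z.eq_dec u 0) as [Hu|Hu].
  - destruct (fresh L HL 1 []) as (l & Hlen & Hnd & Hf & _).
    destruct l as [|y0 [|]]; simpl in Hlen; try discriminate.
    inversion Hf; subst.
    exists [y0], (length (bt_digits y0)), (Z.of_nat (zsc y0)), (Z.sgn y0).
    intros i Hi. assert (i = 0%nat) by lia. subst i.
    exists y0. split; [|split; [auto|lia]].
    split; [|split; [|lia]].
    + exists [y0], []. split; [constructor; [intros []|constructor]|].
      split; [constructor|]. split; [constructor; auto|]. split; [constructor|].
      split; [intros x Hx; exact Hx|]. split; [intros x []|]. simpl; lia.
    + specialize (HP y0 H1). lia.
  - exists [], (length (bt_digits u)), (Z.of_nat (zsc u)), (Z.sgn u).
    intros i Hi. assert (i = 0%nat) by lia. subst i.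
    exists u. split; [|split; [auto|lia]].
    split; [|split; [auto|lia]].
    exists [], []. split; [constructor|]. split; [constructor|]. split; [constructor|].
    split; [constructor|]. split; [intros x []|]. split; [intros x []|]. simpl; lia.
Qed.

Lemma iter : forall L u, (forall x, L x -> 1 <= x) -> infinite_set L ->
  forall n, (1 <= n)%nat -> exists U M a s, Fam L u U M n a s.
Proof.
  intros L u HP HL n Hn. induction n as [|n IH]; [lia|].
  destruct (Nat.eq_dec n 0) as [->|Hn0]; [apply base; auto|].
  destruct (IH ltac:(lia)) as (U & M & a & s & HF).
  destruct (step1 L u HL U M n a s HF) as (U' & M' & a' & s' & H1 & H2).
  exact (step2 L u HL U' M' n a' s' ltac:(lia) H1 H2).
Qed.

Lemma zsum_IP : forall L F, NoDup F -> Forall L F -> IP L (zsum F).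
Proof. intros L F H1 H2. exists F. auto. Qed.

Theorem theorem4p6 :
  forall (A : Z -> Prop),
    (forall a, A a -> 1 <= a) ->
    (exists (L : Z -> Prop) (u : Z),
        (forall x, L x -> 1 <= x) /\ infinite_set L /\
        (forall n, 1 <= n -> SIP L (n - u) -> A n)) ->
    forall K : Z, 0 < K -> Z.odd K = true ->
    forall r : Z, exists a, A a /\ Z.of_nat (zsc a) mod K = r mod K.
Proof.
  intros A _ (L & u & HP & HL & HA) K HK Hodd r.
  destruct (iter L u HP HL (Z.to_nat K) ltac:(lia)) as (U & M & a & s & HF).
  destruct (step1 L u HL U M _ a s HF) as (U' & M' & a' & s' & H1 & H2).
  assert (Hpos : exists b, forall i, (i < Z.to_nat K)%nat ->
            exists y, Good L u U' y /\ 0 < y /\ Z.of_nat (zsc y) = b + 2 * Z.of_nat i).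
  { assert (Hs : s' = 1 \/ s' = -1).
    { destruct (H1 0%nat ltac:(lia)) as (y & (_ & Hy & _) & Sg & _). rewrite <- Sg. apply sgn_pm; auto. }
    destruct Hs as [-> | ->].
    - exists a'. intros i Hi. destruct (H1 i Hi) as (y & (G & _ & _) & Sg & Zy).
      exists y. split; auto. split; auto. apply Z.sgn_pos_iff. auto.
    - exists (a' + 1). intros i Hi. destruct (H2 i Hi) as (y & (G & _ & _) & Sg & Zy).
      exists y. split; auto. split; auto. apply Z.sgn_pos_iff. lia. }
  destruct Hpos as (b & Hb).
  apply Z.odd_spec in Hodd. destruct Hodd as (k & Hk).
  set (i0 := ((r - b) * (k + 1)) mod K).
  assert (Hi0 : 0 <= i0 < K) by (apply Z.mod_pos_bound; lia).
  destruct (Hb (Z.to_nat i0) ltac:(lia)) as (y & G & Hy & Zy).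
  exists y. split.
  - apply HA; [lia|]. destruct G as (F & G & NF & NG & LF & LG & _ & _ & Ey).
    exists (zsum F), (zsum G). split; [apply zsum_IP; auto|]. split; [apply zsum_IP; auto|]. lia.
  - rewrite Zy, Z2Nat.id by lia.
    pose proof (Z.div_mod ((r - b) * (k + 1)) K ltac:(lia)) as Hd. fold i0 in Hd.
    set (q := (r - b) * (k + 1) / K) in *.
    replace (b + 2 * i0) with (r + ((r - b) - 2 * q) * K) by (subst K; nia).
    apply Z.mod_add. lia.
Qed.
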